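(* Fix $\alpha>1$ and $K>1$. For $n\ge2$ let $\mathcal{M}=\mathcal{M}(\alpha,K)$ be the seeded intervals defined below, and let $N_n$ be the number of distinct integer triples $(s,v,e)$ with $(s,e]\in\mathcal{M}$ and $s<v<e$. Then $N_n=\mathcal{O}(n\log n)$, i.e. there is a constant $C$ depending only on $\alpha$ and $K$ such that $N_n\le Cn\log n$ for all $n\ge2$.
   Context: Seeded intervals $\mathcal{M}(\alpha,K)$ for sample size $n$: let $l_1=1$, $l_{j+1}=\max\{l_j+1,\lfloor\alpha l_j\rfloor\}$ for $j\ge1$, $H=\max\{j:l_j\le n/2\}$, $s_l=\max\{1,\lfloor l/K\rfloor\}$, $\mathcal{I}_l=\{(n-2l,n]\}\cup\{(is_l,\,is_l+2l]: i=0,1,\dots,\lfloor(n-2l)/s_l\rfloor\}$, and $\mathcal{M}(\alpha,K)=\bigcup_{j=1}^{H}\mathcal{I}_{l_j}$, where $(a,b]$ denotes the integer interval $\{a+1,\dots,b\}$. *)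

(* Defs.v *)
From mathcomp Require Import all_boot all_order all_algebra.
From mathcomp Require Import all_classical all_reals all_analysis.
Set Implicit Arguments. Unset Strict Implicit. Unset Printing Implicit Defensive.
Import Order.TTheory GRing.Theory Num.Theory.
Local Open Scope ring_scope.

Section Seeded.
Variable R : realType.
Variables (alpha K : R).

(* ell_aux k = l_{k+1} (0-indexed auxiliary sequence). *)
Fixpoint ell_aux (k : nat) : nat :=
  match k with
  | 0 => 1%N
  | k'.+1 => maxn (ell_aux k').+1 (Num.truncn (alpha * (ell_aux k')%:R))
  end.

(* Paper's indexing: ell j = l_j for j >= 1 (ell 1 = 1). *)
Definition ell (j : nat) : nat := ell_aux j.-1.

(* H = max { j >= 1 : l_j <= n/2 }.  Since l_j >= j, any such j is <= n. *)
Definition seedH (n : nat) : nat :=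
  \max_(1 <= j < n.+1 | (2 * ell j <= n)%N) j.

Definition seed_step (l : nat) : nat := maxn 1 (Num.truncn (l%:R / K)).

(* I_l, an interval (a,b] being encoded as the pair (a,b). *)
Definition seedI (n l : nat) : seq (nat * nat) :=
  (n - 2 * l, n)%N ::
  [seq ((i * seed_step l)%N, (i * seed_step l + 2 * l)%N)
     | i <- iota 0 ((n - 2 * l) %/ seed_step l).+1].

Definition seedM (n : nat) : seq (nat * nat) :=
  undup (flatten [seq seedI n (ell j) | j <- iota 1 (seedH n)]).

Definition seed_triples (n : nat) : seq (nat * nat * nat) :=
  flatten [seq [seq (p.1, v, p.2) | v <- iota p.1.+1 (p.2 - p.1.+1)]
          | p <- seedM n].

Definition seedN (n : nat) : nat := size (undup (seed_triples n)).

End Seeded.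

(* Main.v *)
Require Import Defs.
From mathcomp Require Import all_boot all_order all_algebra.
From mathcomp Require Import all_classical all_reals all_analysis.
From mathcomp Require Import zify ring lra.
Import Order.TTheory GRing.Theory Num.Theory.
Local Open Scope ring_scope.

Lemma sumn_undup (T : eqType) (h : T -> nat) (s : seq T) :
  (sumn (map h (undup s)) <= sumn (map h s))%N.
Proof.
elim: s => [|x s IH] //=.
case: (x \in s) => /=.
  by apply: leq_trans IH _; apply: leq_addl.
by rewrite leq_add2l.
Qed.

Lemma sumn_flatten_map (T : Type) (h : T -> nat) (ss : seq (seq T)) :
  sumn (map h (flatten ss)) = sumn (map (fun s => sumn (map h s)) ss).
Proof.
elim: ss => [|s ss IH] //=.
by rewrite map_cat sumn_cat IH.
Qed.

Lemma sumn_le_const (T : eqType) (h : T -> nat) (B : nat) (s : seq T) :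
  (forall x, x \in s -> (h x <= B)%N) -> (sumn (map h s) <= B * size s)%N.
Proof.
elim: s => [|x s IH] //= Hx.
rewrite mulnS leq_add //; first by apply: Hx; rewrite mem_head.
by apply: IH => y hy; apply: Hx; rewrite in_cons hy orbT.
Qed.

Lemma sumn_le_real (R : realType) (T : eqType) (h : T -> nat) (B : R) (s : seq T) :
  (forall x, x \in s -> (h x)%:R <= B) -> (sumn (map h s))%:R <= (size s)%:R * B.
Proof.
elim: s => [|x s IH] /= Hx; first by rewrite mul0r.
rewrite natrD -addn1 natrD mulrDl mul1r addrC lerD //.
  by apply: IH => y hy; apply: Hx; rewrite in_cons hy orbT.
by apply: Hx; rewrite mem_head.
Qed.

Lemma ell_aux_mono (R : realType) (alpha : R) m d :
  (ell_aux alpha m <= ell_aux alpha (m + d))%N.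
Proof.
elim: d => [|d IH]; first by rewrite addn0.
rewrite addnS /=; apply: leq_trans IH _.
by apply: leq_trans (leq_maxl _ _); apply: leqnSn.
Qed.

Lemma ell_aux_pos (R : realType) (alpha : R) k : (0 < ell_aux alpha k)%N.
Proof. by case: k => [|k] //=; apply: leq_trans (leq_maxl _ _). Qed.

Lemma ell_growth (R : realType) (alpha : R) (ha : 1 < alpha) k :
  ((alpha + 1) / 2) ^+ k <= (ell_aux alpha k)%:R.
Proof.
elim: k => [|k IH]; first by rewrite expr0 /=.
rewrite exprS /=.
set e := ell_aux alpha k.
have ge : ((alpha + 1) / 2) * e%:R <= (maxn e.+1 (Num.truncn (alpha * e%:R)))%:R.
  have e0 : 0 <= (e%:R : R) by [].
  case: (lerP ((alpha - 1) * e%:R) 2) => hc.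
    apply: le_trans (_ : (e.+1)%:R <= _); last by rewrite ler_nat leq_maxl.
    rewrite -addn1 natrD.
    have : (alpha - 1) * e%:R = alpha * e%:R - e%:R by rewrite mulrBl mul1r.
    move=> E. have -> : (alpha + 1) / 2 * e%:R = (alpha * e%:R + e%:R) / 2 by ring.
    move: E hc; generalize (alpha * e%:R) => y E hc. lra.
  have ht : alpha * e%:R < (Num.truncn (alpha * e%:R)).+1%:R.
    by rewrite -truncn_le_nat.
  apply: le_trans (_ : (Num.truncn (alpha * e%:R))%:R <= _); last by rewrite ler_nat leq_maxr.
  move: ht; rewrite -addn1 natrD => ht.
  have : (alpha - 1) * e%:R = alpha * e%:R - e%:R by rewrite mulrBl mul1r.
  move=> E. have -> : (alpha + 1) / 2 * e%:R = (alpha * e%:R + e%:R) / 2 by ring.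
  move: E hc ht; generalize (alpha * e%:R) => y E hc ht. lra.
apply: le_trans ge.
apply: ler_wpM2l => //.
apply: divr_ge0 => //; lra.
Qed.

Lemma seedH_spec (R : realType) (alpha : R) n :
  seedH alpha n = 0%N \/ (2 * ell alpha (seedH alpha n) <= n)%N.
Proof.
rewrite /seedH.
apply: (big_ind (fun x => x = 0%N \/ (2 * ell alpha x <= n)%N)); first by left.
  by move=> x y hx hy; rewrite /maxn; case: ifP.
by move=> i hi; right.
Qed.

Lemma seed_step_bound (R : realType) (K : R) (hK : 1 < K) l :
  (l%:R : R) <= 2 * K * (seed_step K l)%:R.
Proof.
rewrite /seed_step.
set t := Num.truncn (l%:R / K).
have K0 : 0 < K by lra.
have ht : (l%:R : R) / K < t.+1%:R by rewrite -truncn_le_nat.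
have hl : (l%:R : R) < K * t.+1%:R.
  by rewrite -ltr_pdivrMl // mulrC.
have hm : (t.+1%:R : R) <= 2 * (maxn 1 t)%:R.
  rewrite -natrM ler_nat; case: t {ht hl} => [|t] //=; lia.
apply: le_trans (ltW hl) _.
by rewrite [2 * K]mulrC -mulrA ler_pM2l.
Qed.

Definition hlen (p : nat * nat) : nat := (p.2 - p.1.+1)%N.

Lemma level_bound (R : realType) (K : R) (hK : 1 < K) n l :
  (1 <= l)%N -> (2 * l <= n)%N ->
  (sumn (map hlen (seedI K n l)))%:R <= (4 * K + 2) * (n%:R : R).
Proof.
move=> l1 l2.
have H1 : (sumn (map hlen (seedI K n l)) <= 2 * l * ((n - 2 * l) %/ seed_step K l).+2)%N.
  have -> : ((n - 2 * l) %/ seed_step K l).+2 = size (seedI K n l).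
    by rewrite /seedI /= size_map size_iota.
  apply: sumn_le_const => x; rewrite /seedI in_cons => /orP [/eqP -> | /mapP [i _ ->]];
    rewrite /hlen /=; lia.
apply: le_trans (_ : (2 * l * ((n - 2 * l) %/ seed_step K l).+2)%:R <= _).
  by rewrite ler_nat.
set s := seed_step K l.
set d := ((n - 2 * l) %/ s)%N.
have hs : (l%:R : R) <= 2 * K * s%:R by apply: seed_step_bound.
have hd : (d%:R : R) * s%:R <= n%:R.
  rewrite -natrM ler_nat; apply: leq_trans (leq_divM _ _) _; apply: leq_subr.
have hl : (2 * l%:R : R) <= n%:R by rewrite -[2]/(2%:R) -natrM ler_nat.
have d0 : (0 : R) <= d%:R by [].
have K0 : (0 : R) <= K by lra.
have e1 : (2 : R) * l%:R * d%:R <= 2 * (2 * K * s%:R) * d%:R.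
  by rewrite ler_wpM2r // ler_wpM2l.
have e2 : (2 * K * s%:R : R) * d%:R <= 2 * K * n%:R.
  by rewrite -mulrA ler_wpM2l ?mulr_ge0 // mulrC.
have E : ((2 * l * d.+2)%N%:R : R) = 2 * l%:R * (d%:R + 2).
  by rewrite !natrM -[d.+2]addn2 natrD.
rewrite E.
have e3 : (2 * l%:R * d%:R : R) <= 2 * K * n%:R * 2.
  apply: le_trans e1 _.
  have -> : (2 * (2 * K * s%:R) * d%:R : R) = 2 * K * s%:R * d%:R * 2 by ring.
  by rewrite ler_wpM2r.
have -> : (2 * l%:R * (d%:R + 2) : R) = 2 * l%:R * d%:R + 2 * (2 * l%:R) by ring.
have -> : ((4 * K + 2) * n%:R : R) = 2 * K * n%:R * 2 + 2 * n%:R by ring.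
apply: lerD => //.
by rewrite ler_wpM2l.
Qed.

Theorem lemma9 (R : realType) (alpha K : R) (halpha : 1 < alpha) (hK : 1 < K) :
  exists C : R, forall n : nat, (2 <= n)%N ->
    (seedN alpha K n)%:R <= C * n%:R * ln (n%:R : R).
Proof.
set g : R := (alpha + 1) / 2.
have g1 : 1 < g by rewrite /g; lra.
have lg0 : 0 < ln g by apply: ln_gt0.
have l20 : 0 < ln (2 : R) by apply: ln_gt0; lra.
exists ((4 * K + 2) * (1 / ln g + 1 / ln 2)) => n n2.
set H := seedH alpha n.
set B : R := (4 * K + 2) * n%:R.
have n2R : (2 : R) <= n%:R by rewrite -[2]/(2%:R) ler_nat.
have Ln2 : ln 2 <= ln (n%:R : R).
  by rewrite ler_ln // posrE; lra.
have B0 : 0 <= B by rewrite /B; apply: mulr_ge0 => //; lra.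
have step1 : (seedN alpha K n <= sumn (map hlen (seedM alpha K n)))%N.
  apply: leq_trans (size_undup _) _.
  rewrite /seed_triples size_flatten /shape -map_comp.
  apply: eq_leq; congr sumn; apply: eq_map => p /=.
  by rewrite size_map size_iota.
have step2 : (sumn (map hlen (seedM alpha K n)) <=
    sumn (map (fun j => sumn (map hlen (seedI K n (ell alpha j)))) (iota 1 H)))%N.
  rewrite /seedM -/H. apply: leq_trans; first exact: sumn_undup.
  by rewrite sumn_flatten_map -map_comp.
have step3 : (sumn (map (fun j => sumn (map hlen (seedI K n (ell alpha j)))) (iota 1 H)))%:R
    <= (size (iota 1 H))%:R * B.
  apply: sumn_le_real => j; rewrite mem_iota => /andP [j1 jH].
  case: (seedH_spec _ alpha n) => hH.
    by move: jH; rewrite /H hH; lia.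
  apply: level_bound => //; first by apply: ell_aux_pos.
  apply: leq_trans hH; rewrite leq_mul2l /= /ell.
  have := ell_aux_mono _ alpha j.-1 (H - j).
  by have -> : (j.-1 + (H - j) = H.-1)%N by lia.
rewrite size_iota in step3.
have stepN : ((seedN alpha K n)%:R : R) <= H%:R * B.
  apply: le_trans step3; rewrite ler_nat; exact: leq_trans step1 step2.
apply: le_trans stepN _.
set Ln := ln (n%:R : R).
have hH : (H%:R : R) <= Ln / ln g + Ln / ln 2.
  have [H0|H1] := posnP H.
    rewrite H0; apply: addr_ge0; apply: divr_ge0; rewrite /Ln; lra.
  have hH : (2 * ell alpha H <= n)%N.
    by case: (seedH_spec _ alpha n) => // h; move: H1; rewrite /H h.
  have hg : g ^+ H.-1 <= n%:R.
    apply: le_trans (ell_growth _ _ halpha H.-1) _.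
    rewrite ler_nat; apply: leq_trans hH; rewrite /ell -/H; lia.
  have hl : ln (g ^+ H.-1) <= Ln.
    rewrite ler_ln // posrE ?exprn_gt0 //; lra.
  rewrite lnXn in hl; last lra.
  rewrite -mulr_natr in hl.
  have a1 : (H.-1%:R : R) <= Ln / ln g by rewrite ler_pdivlMr // mulrC.
  have a2 : (1 : R) <= Ln / ln 2 by rewrite ler_pdivlMr // mul1r.
  have -> : (H%:R : R) = H.-1%:R + 1 by rewrite natr1 prednK.
  by apply: lerD.
apply: le_trans (_ : (Ln / ln g + Ln / ln 2) * B <= _).
  by apply: ler_wpM2r.
rewrite le_eqVlt; apply/orP; left; apply/eqP; rewrite /B; clear hH; move: (ln g) (ln (2:R)) Ln (n%:R : R) => a b c m. rewrite !mul1r; ring.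
Qed.
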